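(* Let $\xi=(\omega,\gamma,\mu,c)$ be a normalized quasi-abelian 3-cocycle on a finite crossed module $(G,X,\partial)$, and let $R$ be a complete set of representatives of the orbits of $G$ on $X$. For $a\in R$ let $\phi_a(g,h)=\gamma_{g,h}(a)$ for $g,h\in\mathrm{Stab}_G(a)=\{g\in G\mid {}^ga=a\}$ (a 2-cocycle on $\mathrm{Stab}_G(a)$). Then the set of isomorphism classes of simple objects of $\mathcal{C}(\xi)^G$ is in bijection with the set of isomorphism classes of $$\Gamma=\{(a,V)\mid a\in R,\ V \text{ an irreducible module over } \mathbb{K}_{\phi_a}[\mathrm{Stab}_G(a)]\},$$ where $(a,V)$ and $(a',V')$ are isomorphic if $a=a'$ and $V\cong V'$.
   Context: $\mathbb{K}$ is an algebraically closed field of characteristic $0$. A module over the twisted group algebra $\mathbb{K}_{\phi}[H]$ (for a 2-cocycle $\phi$ on a finite group $H$) means, as used here, a finite-dimensional vector space $V$ with linear maps $v\mapsto t\triangleright v$ ($t\in H$) such that $st\triangleright v=\phi(s,t)\,(s\triangleright(t\triangleright v))$ and $e\triangleright v=v$. A finite crossed module is a triple $(G,X,\partial)$ with $G,X$ finite groups, $G$ acting on $X$ by automorphisms $(g,x)\mapsto {}^{g}x$, and $\partial:X\to G$ a homomorphism with ${}^{\partial(x)}x'=xx'x^{-1}$ and $\partial({}^gx)=g\partial(x)g^{-1}$. A quasi-abelian 3-cocycle on it is a quadruple $\xi=(\omega,\gamma,\mu,c)$ of functions $\omega:X^3\to\mathbb{K}^\times$, $(g,h,x)\mapsto\gamma_{g,h}(x)$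 on $G\times G\times X$, $(g,x,y)\mapsto\mu_g(x,y)$ on $G\times X\times X$, $c:X^2\to\mathbb{K}^\times$, such that for all $g,h,k\in G$, $w,x,y,z\in X$: (a) $\omega(x,y,z)\omega(w,xy,z)\omega(w,x,y)=\omega(w,x,yz)\omega(wx,y,z)$; (b) $\gamma_{h,k}(x)\gamma_{g,hk}(x)=\gamma_{gh,k}(x)\gamma_{g,h}({}^kx)$; (c) $\frac{\mu_g(y,z)\mu_g(x,yz)}{\mu_g(xy,z)\mu_g(x,y)}=\frac{\omega({}^gx,{}^gy,{}^gz)}{\omega(x,y,z)}$; (d) $\frac{\gamma_{g,h}(x)\gamma_{g,h}(y)}{\gamma_{g,h}(xy)}=\frac{\mu_g({}^hx,{}^hy)\mu_h(x,y)}{\mu_{gh}(x,y)}$; (e) $\frac{c({}^gx,{}^gy)}{c(x,y)}=\frac{\mu_g(xyx^{-1},x)}{\mu_g(x,y)}\cdot\frac{\gamma_{g\partial(x)g^{-1},g}(y)}{\gamma_{g,\partial(x)}(y)}$; (f) $c(xy,z)=\frac{\omega(x,y,z)\,\omega((xy)z(xy)^{-1},x,y)}{\omega(x,yzy^{-1},y)\,\gamma_{\partial(x),\partial(y)}(z)}\,c(x,yzy^{-1})\,c(y,z)$; (g) $c(x,yz)=\frac{\omega(xyx^{-1},x,z)}{\omega(x,y,z)\,\omega(xyx^{-1},xzx^{-1},x)\,\mu_{\partial(x)}(y,z)}\,c(x,y)\,c(x,z)$. It is normalized if $\omega(x,y,z)=1$ whenever one of $x,y,z$ is $e$, $\gamma_{g,h}(x)=1$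 whenever one of $g,h,x$ is $e$, $\mu_g(x,y)=1$ whenever one of $g,x,y$ is $e$, and $c(x,y)=1$ whenever $x$ or $y$ is $e$. $\mathcal{C}(\xi)$ denotes the fusion category $\mathrm{Vec}_X^\omega$ of finite-dimensional $X$-graded vector spaces (tensor product $\otimes_\mathbb{K}$ with degrees multiplied, associativity $(u\otimes v)\otimes w\mapsto\omega(x,y,z)u\otimes(v\otimes w)$) with: the $G$-grading with $\mathcal{C}_g$ the objects supported on $\partial^{-1}(g)$; functors $T_g$ sending homogeneous $V$ of degree $x$ to the same space in degree ${}^gx$; and for homogeneous $V,W$ of degrees $x,y$ the isomorphisms $\tilde\gamma_{g,h}(V)=\gamma_{g,h}(x)\mathrm{id}_V:T_{gh}(V)\to T_gT_h(V)$, $\tilde\mu_g(V,W)=\mu_g(x,y)\mathrm{id}:T_g(V\otimes W)\to T_gV\otimes T_gW$, $\tilde c(V,W)=c(x,y)\tau_{V,W}:V\otimes W\to T_{\partial(x)}(W)\otimes V$ ($\tau$ the flip). The equivariantization $\mathcal{C}(\xi)^G$ is the braided fusion category of pairs $(V,\{u_g\}_{g\in G})$, $u_g:T_g(V)\to V$ isomorphisms with $u_{gh}=u_g\circ T_g(u_h)\circ\tilde\gamma_{g,h}(V)$; morphisms are morphisms of $\mathrm{Vec}_X^\omega$ commuting with the $u_g$; tensor product $(V\otimes V',\{(u_g\otimes u'_g)\circ\tilde\mu_g(V,V')\})$; braiding given on $V_g\otimes V'$ ($V_g$ the component of $V$ in $\mathcal{C}_g$) by $(u'_g\otimes\mathrm{id})\circ\tilde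 c(V_g,V')$. *)

(* Defs.v *)
From HB Require Import structures.
From mathcomp Require Import all_boot all_order all_fingroup all_algebra.
Set Implicit Arguments. Unset Strict Implicit. Unset Printing Implicit Defensive.
Import GRing.Theory.
Local Open Scope ring_scope.

Section Defs.
Variables (K : fieldType) (gT xT : finGroupType).

Definition crossed_module (act : gT -> xT -> xT) (del : xT -> gT) : Prop :=
  (forall x, act 1%g x = x) /\
  (forall g h x, act (g * h)%g x = act g (act h x)) /\
  (forall g x y, act g (x * y)%g = (act g x * act g y)%g) /\
  (forall x y, del (x * y)%g = (del x * del y)%g) /\
  (forall x x', act (del x) x' = (x * x' * x^-1)%g) /\
  forall g x, del (act g x) = (g * del x * (g^-1))%g.

(* Quasi-abelian 3-cocycle (omega, gamma, mu, c), conditions (a)-(g),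
   with values in K^x. gamma g h x = gamma_{g,h}(x), mu g x y = mu_g(x,y). *)
Definition quasi_abelian_3cocycle (act : gT -> xT -> xT) (del : xT -> gT)
  (omega : xT -> xT -> xT -> K) (gamma : gT -> gT -> xT -> K)
  (mu : gT -> xT -> xT -> K) (c : xT -> xT -> K) : Prop :=
  ((forall x y z, omega x y z != 0) /\ (forall g h x, gamma g h x != 0) /\
      (forall g x y, mu g x y != 0) /\ (forall x y, c x y != 0)) /\
   (forall w x y z,
      omega x y z * omega w (x * y)%g z * omega w x y
      = omega w x (y * z)%g * omega (w * x)%g y z) /\
   (forall g h k x,
      gamma h k x * gamma g (h * k)%g x = gamma (g * h)%g k x * gamma g h (act k x)) /\
   (forall g x y z,
      mu g y z * mu g x (y * z)%g / (mu g (x * y)%g z * mu g x y)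
      = omega (act g x) (act g y) (act g z) / omega x y z) /\
   (forall g h x y,
      gamma g h x * gamma g h y / gamma g h (x * y)%g
      = mu g (act h x) (act h y) * mu h x y / mu (g * h)%g x y) /\
   (forall g x y,
      c (act g x) (act g y) / c x y
      = mu g (x * y * x^-1)%g x / mu g x y *
        (gamma (g * del x * g^-1)%g g y / gamma g (del x) y)) /\
   (forall x y z,
      c (x * y)%g z
      = omega x y z * omega ((x * y) * z * (x * y)^-1)%g x y
        / (omega x (y * z * y^-1)%g y * gamma (del x) (del y) z)
        * c x (y * z * y^-1)%g * c y z) /\
   (forall x y z,
      c x (y * z)%g
      = omega (x * y * x^-1)%g x z
        / (omega x y z * omega (x * y * x^-1)%g (x * z * x^-1)%g x * mu (del x) y z)
        * c x y * c x z).

Definition normalized_cocycle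
  (omega : xT -> xT -> xT -> K) (gamma : gT -> gT -> xT -> K)
  (mu : gT -> xT -> xT -> K) (c : xT -> xT -> K) : Prop :=
  [/\ forall x y z, [|| x == 1%g, y == 1%g | z == 1%g] -> omega x y z = 1,
      forall g h x, [|| g == 1%g, h == 1%g | x == 1%g] -> gamma g h x = 1,
      forall g x y, [|| g == 1%g, x == 1%g | y == 1%g] -> mu g x y = 1
    & forall x y, (x == 1%g) || (y == 1%g) -> c x y = 1].

Definition orbit_reps (act : gT -> xT -> xT) (R : {set xT}) : Prop :=
  (forall x, exists2 r, r \in R & exists g, x = act g r) /\
  (forall r r' g, r \in R -> r' \in R -> act g r = r' -> r = r').

Definition Stab (act : gT -> xT -> xT) (a : xT) : {set gT} :=
  [set g | act g a == a].

(* A module is K^k (row vectors); t |> v is v *m rho t. *)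
Record tmod := TMod { tm_dim : nat; tm_rho : gT -> 'M[K]_tm_dim }.

Definition is_tmod (S : {set gT}) (phi : gT -> gT -> K) (V : tmod) : Prop :=
  tm_rho V 1%g = 1%:M /\
  (forall s t, s \in S -> t \in S ->
     tm_rho V (s * t)%g = phi s t *: (tm_rho V t *m tm_rho V s)).

Definition irr_tmod (S : {set gT}) (phi : gT -> gT -> K) (V : tmod) : Prop :=
  is_tmod S phi V /\ (0 < tm_dim V)%N /\
  (forall U : 'M[K]_(tm_dim V),
     (forall s, s \in S -> (U *m tm_rho V s <= U)%MS) ->
     U = 0 \/ row_full U).

Definition tmod_iso (S : {set gT}) (V V' : tmod) : Prop :=
  exists B : 'M[K]_(tm_dim V, tm_dim V'),
    [/\ row_free B, row_full B &
        forall s, s \in S -> tm_rho V s *m B = B *m tm_rho V' s].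

(* An object: the X-graded space K^n with homogeneous standard basis,
   e_i of degree eq_deg i; u_g : T_g(V) -> V is v |-> v *m eq_u g. *)
Record eqobj := EqObj {
  eq_dim : nat;
  eq_deg : 'I_eq_dim -> xT;
  eq_u : gT -> 'M[K]_eq_dim }.
Arguments eq_deg e _ : clear implicits.

Definition is_eqobj (act : gT -> xT -> xT) (gamma : gT -> gT -> xT -> K)
  (V : eqobj) : Prop :=
  [/\
      forall g (i j : 'I_(eq_dim V)), eq_u V g i j != 0 ->
        eq_deg V j = act g (eq_deg V i),
      forall g, eq_u V g \in unitmx
    & (* u_{gh} = u_g o T_g(u_h) o gamma~_{g,h}(V) *)
      forall g h, eq_u V (g * h)%g =
        diag_mx (\row_i gamma g h (eq_deg V i)) *m eq_u V h *m eq_u V g].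

Definition is_eqmor (W V : eqobj)
  (F : 'M[K]_(eq_dim W, eq_dim V)) : Prop :=
  (forall i j, F i j != 0 -> eq_deg W i = eq_deg V j) /\
  (forall g, eq_u W g *m F = F *m eq_u V g).
Arguments is_eqmor W V F : clear implicits.

Definition eq_iso (W V : eqobj) : Prop :=
  exists F : 'M[K]_(eq_dim W, eq_dim V),
    [/\ is_eqmor W V F, row_free F & row_full F].

Definition simple_eqobj (act : gT -> xT -> xT) (gamma : gT -> gT -> xT -> K)
  (V : eqobj) : Prop :=
  (0 < eq_dim V)%N /\
  forall (W : eqobj) (F : 'M[K]_(eq_dim W, eq_dim V)),
    is_eqobj act gamma W -> is_eqmor W V F -> row_free F ->
    eq_dim W = 0%N \/ row_full F.

End Defs.

(* Main.v *)
Require Import Defs.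
From HB Require Import structures.
From mathcomp Require Import all_boot all_order all_fingroup all_algebra.
From Stdlib Require Import Classical.
From mathcomp Require Import ring.
Set Implicit Arguments. Unset Strict Implicit. Unset Printing Implicit Defensive.
Import GRing.Theory.
Local Open Scope ring_scope.

Notation dg O := (@eq_deg _ _ _ O).
Notation eqmor W V := (@is_eqmor _ _ _ W V).

Section Generic.
Variables (K : fieldType) (gT xT : finGroupType).
Variables (act : gT -> xT -> xT) (gamma : gT -> gT -> xT -> K).
Hypothesis act1 : forall x, act 1%g x = x.
Hypothesis actM : forall g h x, act (g * h)%g x = act g (act h x).
Hypothesis gam_nz : forall g h x, gamma g h x != 0.
Hypothesis gam1l : forall h x, gamma 1%g h x = 1.
Hypothesis gam1r : forall g x, gamma g 1%g x = 1.
Hypothesis gam_coc : forall g h k x,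
      gamma h k x * gamma g (h * k)%g x = gamma (g * h)%g k x * gamma g h (act k x).

Lemma actK g x : act g^-1 (act g x) = x.
Proof. by rewrite -actM mulVg act1. Qed.
Lemma actKV g x : act g (act g^-1 x) = x.
Proof. by rewrite -actM mulgV act1. Qed.
Lemma act_inj g : injective (act g).
Proof. by move=> x y /(congr1 (act g^-1)); rewrite !actK. Qed.

Definition piD (O : eqobj K gT xT) (b : xT) : 'M[K]_(eq_dim O) :=
  diag_mx (\row_i ((dg O i == b)%:R)).
Definition Dg (O : eqobj K gT xT) g h : 'M[K]_(eq_dim O) :=
  diag_mx (\row_i gamma g h (dg O i)).

Lemma graded_piD (W V : eqobj K gT xT) (F : 'M[K]_(eq_dim W, eq_dim V)) :
  (forall i j, F i j != 0 -> dg W i = dg V j) ->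
  forall b, piD W b *m F = F *m piD V b.
Proof.
move=> H b; rewrite /piD mul_diag_mx mul_mx_diag; apply/matrixP=> i j; rewrite !mxE.
have [->|/H ->] := eqVneq (F i j) 0; first by rewrite mulr0 mul0r.
by rewrite mulrC.
Qed.

Lemma piD_graded (W V : eqobj K gT xT) (F : 'M[K]_(eq_dim W, eq_dim V)) :
  (forall b, piD W b *m F = F *m piD V b) ->
  forall i j, F i j != 0 -> dg W i = dg V j.
Proof.
move=> H i j nz; move: (H (dg W i)); rewrite /piD mul_diag_mx mul_mx_diag.
move/matrixP=> /(_ i j); rewrite !mxE eqxx mul1r.
case: eqP => // _; rewrite mulr0 => E; by rewrite E eqxx in nz.
Qed.

Lemma inv_eqmor (W V : eqobj K gT xT) (F : 'M[K]_(eq_dim W, eq_dim V)) G :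
  eqmor W V F -> F *m G = 1%:M -> G *m F = 1%:M -> eqmor V W G.
Proof.
move=> [Hd Hu] FG GF; split.
  apply: piD_graded => b.
  have E := graded_piD Hd b.
  by rewrite -[LHS]mul1mx -GF -mulmxA (mulmxA F) -E -!mulmxA FG mulmx1.
move=> g.
by rewrite -[LHS]mul1mx -GF -mulmxA (mulmxA F) -Hu -!mulmxA FG mulmx1.
Qed.

Lemma iso_of_inv (W V : eqobj K gT xT) (F : 'M[K]_(eq_dim W, eq_dim V)) :
  eqmor W V F -> row_free F -> row_full F -> eq_iso V W.
Proof.
move=> HF /row_freeP[G FG] /row_fullP[G' GF].
have GG : G' = G by rewrite -[G']mulmx1 -FG mulmxA GF mul1mx.
subst G'; exists G; split; first exact: inv_eqmor HF FG GF.
  by apply/row_freeP; exists F.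
by apply/row_fullP; exists F.
Qed.

Lemma piD_u (O : eqobj K gT xT) g b : is_eqobj act gamma O ->
  piD O b *m eq_u O g = eq_u O g *m piD O (act g b).
Proof.
move=> [Hd _ _]; rewrite /piD mul_diag_mx mul_mx_diag; apply/matrixP=> i j; rewrite !mxE.
have [->|/Hd ->] := eqVneq (eq_u O g i j) 0; first by rewrite mulr0 mul0r.
by rewrite (inj_eq (@act_inj g)) mulrC.
Qed.

Lemma Dg11 (O : eqobj K gT xT) : Dg O 1%g 1%g = 1%:M.
Proof.
rewrite /Dg; apply/matrixP=> i j; rewrite !mxE gam1l; by case: (i == j).
Qed.

Lemma eqobj_u1 (O : eqobj K gT xT) : is_eqobj act gamma O -> eq_u O 1%g = 1%:M.
Proof.
move=> [_ Hu Hc]; have := Hc 1%g 1%g; rewrite mulg1.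
rewrite -/(Dg O 1 1) Dg11 mul1mx => E.
have: row_free (eq_u O 1%g) by rewrite row_free_unit. move=> /row_free_inj inj. apply: (inj (eq_dim O)).
by rewrite /= mul1mx -E.
Qed.

Lemma supp_Dg (O : eqobj K gT xT) m (J : 'M[K]_(m, eq_dim O)) a g h :
  (forall i j, J i j != 0 -> dg O j = a) -> J *m Dg O g h = gamma g h a *: J.
Proof.
move=> H; rewrite /Dg mul_mx_diag; apply/matrixP=> i j; rewrite !mxE.
have [->|/H ->] := eqVneq (J i j) 0; first by rewrite mulr0 mul0r.
by rewrite mulrC.
Qed.

Lemma supp_u (O : eqobj K gT xT) m (J : 'M[K]_(m, eq_dim O)) a g :
  is_eqobj act gamma O ->
  (forall i j, J i j != 0 -> dg O j = a) ->
  forall i j, (J *m eq_u O g) i j != 0 -> dg O j = act g a.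
Proof.
move=> [Hd _ _] H i j; rewrite mxE => nz.
have [k] : exists k, J i k * eq_u O g k j != 0.
  apply/existsP; apply: contraR nz => /existsPn Hn; apply/eqP/big1 => k _; exact/eqP/negPn.
by rewrite mulf_eq0 negb_or => /andP[/H Hj /Hd ->]; rewrite Hj.
Qed.


Definition Orb (a : xT) : {set xT} := [set act g a | g : gT].
Definition TT (a : xT) (V : tmod K gT) := {p : xT * 'I_(tm_dim V) | p.1 \in Orb a}.
Definition NN a V := #|{: TT a V}|.
Definition degk a V (k : 'I_(NN a V)) : xT := (val (enum_val k)).1.
Definition vk a V (k : 'I_(NN a V)) : 'I_(tm_dim V) := (val (enum_val k)).2.
Definition Em a V (b : xT) : 'M[K]_(tm_dim V, NN a V) :=
  \matrix_(v, k) ((degk k == b) && (vk k == v))%:R.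
Definition Pm a V b := (Em a V b)^T.

Lemma degk_Orb a V k : @degk a V k \in Orb a.
Proof. exact: (valP (enum_val k)). Qed.

Lemma ek_eq a V (k l : 'I_(NN a V)) : (degk k == degk l) && (vk k == vk l) = (k == l).
Proof.
rewrite /degk /vk -xpair_eqE -surjective_pairing.
rewrite -(surjective_pairing (val (enum_val l))).
by rewrite (inj_eq val_inj) (inj_eq enum_val_inj).
Qed.

Lemma PAE_entry a V1 V2 b c (A : 'M[K]_(tm_dim V1, tm_dim V2)) k l :
  (Pm a V1 b *m A *m Em a V2 c) k l =
  ((degk k == b) && (degk l == c))%:R * A (vk k) (vk l).
Proof.
rewrite mxE (bigD1 (vk l)) //= big1 => [|w /negbTE nw]; last first.
  by rewrite !mxE [vk l == w]eq_sym nw andbF mulr0.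
rewrite mxE (bigD1 (vk k)) //= big1 => [|v /negbTE nv]; last first.
  by rewrite !mxE [vk k == v]eq_sym nv andbF mul0r.
rewrite !mxE !eqxx !andbT addr0 addr0.
by case: (degk k == b); case: (degk l == c); rewrite ?mul0r ?mulr0 ?mul1r ?mulr1.
Qed.

Lemma PA_entry a V1 b m (A : 'M[K]_(tm_dim V1, m)) k l :
  (Pm a V1 b *m A) k l = (degk k == b)%:R * A (vk k) l.
Proof.
rewrite mxE (bigD1 (vk k)) //= big1 => [|v /negbTE nv]; last first.
  by rewrite !mxE [vk k == v]eq_sym nv andbF mul0r.
by rewrite !mxE eqxx andbT addr0.
Qed.

Lemma E_Pn a V b c : b != c -> Em a V b *m Pm a V c = 0.
Proof.
move=> nbc; apply/matrixP=> v w; rewrite !mxE big1 // => k _; rewrite !mxE.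
case: eqP => [->|]; last by rewrite mul0r.
by rewrite (negbTE nbc) mulr0.
Qed.

Lemma E_Pd a V b : b \in Orb a -> Em a V b *m Pm a V b = 1%:M.
Proof.
move=> Hb; apply/matrixP=> v w; rewrite !mxE.
have -> : \sum_(k < NN a V) Em a V b v k * (Pm a V b) k w =
          \sum_(x : TT a V) ((val x == (b, v)) && (val x == (b, w)))%:R.
  rewrite (reindex (@enum_rank (TT a V))) /=; last first.
    by apply: onW_bij; apply: enum_rank_bij.
  apply: eq_bigr => x _; rewrite !mxE /degk /vk enum_rankK.
  rewrite -natrM mulnb; congr (_ %:R); congr (nat_of_bool _); congr andb; by rewrite -xpair_eqE -surjective_pairing.
pose x0 : TT a V := exist _ (b, v) Hb.
rewrite (bigD1 x0) //= big1 => [|x nx]; last first.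
  case: eqP => [Ex|]; last by [].
  by move: nx; rewrite -(inj_eq val_inj) /= Ex eqxx.
by rewrite eqxx /= xpair_eqE eqxx /= addr0 eq_sym.
Qed.

Lemma PE_entry a V b (k l : 'I_(NN a V)) :
  (Pm a V b *m Em a V b) k l = (k == l)%:R * (degk k == b)%:R.
Proof.
have := PAE_entry b b 1%:M k l; rewrite mulmx1 => ->; rewrite mxE -ek_eq.
case: (degk k =P b) => [Hk|Hk]; case: (degk l =P b) => [Hl|Hl].
- by rewrite Hk Hl eqxx /= mul1r mulr1.
- have -> : (degk k == degk l) = false by apply/eqP; rewrite Hk => E; apply: Hl.
  by rewrite /= ?mul0r ?mulr0.
- have -> : (degk k == degk l) = false by apply/eqP; rewrite Hl.
  by rewrite /= !mul0r.
- by rewrite /= ?mul0r ?mulr0.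
Qed.

Lemma sum_PE a V : \sum_(b in Orb a) Pm a V b *m Em a V b = 1%:M.
Proof.
apply/matrixP=> k l; rewrite summxE.
under eq_bigr => b _ do rewrite PE_entry.
rewrite -mulr_sumr (bigD1 (degk k)) ?degk_Orb //= eqxx big1 ?addr0 ?mulr1.
  by rewrite mxE.
by move=> b /andP[_ nb]; rewrite eq_sym (negbTE nb).
Qed.

Lemma Orb_act a g b : b \in Orb a -> act g b \in Orb a.
Proof. by case/imsetP=> h _ ->; rewrite -actM; apply: imset_f. Qed.
Lemma Orb_self a : a \in Orb a.
Proof. by apply/imsetP; exists 1%g; rewrite ?act1. Qed.

Definition tt a (b : xT) : gT :=
  if b == a then 1%g else odflt 1%g [pick g | act g a == b].
Lemma ttP a b : b \in Orb a -> act (tt a b) a = b.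
Proof.
rewrite /tt; case: eqP => [->|_]; first by rewrite act1.
case/imsetP=> g _ ->; case: pickP => [h /eqP //|/(_ g)]; by rewrite eqxx.
Qed.
Lemma tt_self a : tt a a = 1%g.
Proof. by rewrite /tt eqxx. Qed.

Definition ss a g b := ((tt a (act g b))^-1 * g * tt a b)%g.
Lemma ss_stab a g b : b \in Orb a -> act (ss a g b) a = a.
Proof.
move=> Hb; rewrite /ss !actM ttP //.
have Hc := ttP (Orb_act g Hb); move: (tt a (act g b)) Hc => t' <-; exact: actK.
Qed.
Definition kap a g b := gamma (tt a (act g b)) (ss a g b) a / gamma g (tt a b) a.
Lemma kap_nz a g b : kap a g b != 0.
Proof. by rewrite /kap mulf_neq0 // invr_eq0. Qed.

Definition Um a V g : 'M[K]_(NN a V) :=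
  \sum_(b in Orb a) Pm a V b *m (kap a g b *: tm_rho V (ss a g b)) *m Em a V (act g b).

Definition PhiO a V : eqobj K gT xT := @EqObj K gT xT (NN a V) (@degk a V) (Um a V).

Lemma EU a V g b : b \in Orb a ->
  Em a V b *m Um a V g = (kap a g b *: tm_rho V (ss a g b)) *m Em a V (act g b).
Proof.
move=> Hb; rewrite mulmx_sumr (bigD1 b) //= big1 ?addr0.
  by rewrite !mulmxA E_Pd // mul1mx.
by move=> c /andP[_ nc]; rewrite !mulmxA E_Pn ?mul0mx // eq_sym.
Qed.

Lemma UP a V g b : b \in Orb a ->
  Um a V g *m Pm a V (act g b) = Pm a V b *m (kap a g b *: tm_rho V (ss a g b)).
Proof.
move=> Hb; rewrite mulmx_suml (bigD1 b) //= big1 ?addr0.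
  by rewrite -!mulmxA E_Pd ?Orb_act // mulmx1.
move=> c /andP[_ nc]; rewrite -!mulmxA E_Pn ?mulmx0 //.
by apply: contra nc => /eqP /act_inj ->.
Qed.

Lemma piD_Phi a V b : piD (PhiO a V) b = Pm a V b *m Em a V b.
Proof.
apply/matrixP=> k l; rewrite PE_entry !mxE /=.
by case: (k =P l) => [->|]; rewrite ?eqxx ?mul1r ?mul0r.
Qed.

Lemma ss_in a g b : b \in Orb a -> ss a g b \in Stab act a.
Proof. by move=> Hb; rewrite inE ss_stab. Qed.

Lemma ss1 a b : ss a 1%g b = 1%g.
Proof. by rewrite /ss act1 mulg1 mulVg. Qed.

Lemma kap1 a b : kap a 1%g b = 1.
Proof. by rewrite /kap ss1 act1 gam1r gam1l divr1. Qed.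

Lemma ssM a g h b : ss a (g * h)%g b = (ss a g (act h b) * ss a h b)%g.
Proof.
rewrite /ss actM; set t2 := tt a _; set t1 := tt a (act h b).
by rewrite !mulgA mulgK.
Qed.

Lemma kapM a g h b : b \in Orb a ->
  kap a (g * h)%g b * gamma (ss a g (act h b)) (ss a h b) a =
  gamma g h b * kap a h b * kap a g (act h b).
Proof.
move=> Hb; rewrite /kap ssM actM.
have Hs1 := ss_stab h Hb; have Hs2 := ss_stab g (Orb_act h Hb).
move: Hs1 Hs2; rewrite /ss.
set t := tt a b; set t1 := tt a (act h b); set t2 := tt a (act g (act h b)).
move=> Hs1 Hs2.
set s1 := (t1^-1 * h * t)%g; set s2 := (t2^-1 * g * t1)%g.
have I1 := gam_coc g h t a; rewrite ttP // in I1.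
have I2 := gam_coc g t1 s1 a; rewrite Hs1 in I2.
have e2 : (t1 * s1 = h * t)%g by rewrite /s1 !mulgA mulgV mul1g.
rewrite e2 in I2.
have I3 := gam_coc t2 s2 s1 a; rewrite Hs1 in I3.
have e3 : (t2 * s2 = g * t1)%g by rewrite /s2 !mulgA mulgV mul1g.
rewrite e3 in I3.
have E1 : gamma g h b = gamma h t a * gamma g (h * t) a / gamma (g * h) t a.
  by rewrite I1 mulrC mulKf.
have E2 : gamma g (h * t) a = gamma (g * t1) s1 a * gamma g t1 a / gamma t1 s1 a.
  by rewrite -I2 mulrC mulKf.
have E3 : gamma s2 s1 a = gamma (g * t1) s1 a * gamma t2 s2 a / gamma t2 (s2 * s1) a.
  by rewrite -I3 mulfK.
rewrite E3 E1 E2.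
have := gam_nz t2 (s2 * s1) a; have := gam_nz (g * h) t a; have := gam_nz t1 s1 a.
have := gam_nz h t a; have := gam_nz g t1 a.
move: (gamma t2 (s2 * s1) a) (gamma (g * h) t a) (gamma t1 s1 a) (gamma h t a) (gamma g t1 a).
move=> A B C D E nE nD nC nB nA.
by field; rewrite nA nB nC nD nE.
Qed.

Lemma DgP a V g h b : b \in Orb a ->
  Dg (PhiO a V) g h *m Pm a V b = gamma g h b *: Pm a V b.
Proof.
move=> Hb; rewrite /Dg mul_diag_mx; apply/matrixP=> k v; rewrite !mxE /=.
by case: (eqVneq (degk k) b) => [->|nb]; rewrite ?(negbTE nb) /= ?mulr0.
Qed.

Section TM.
Variables (a : xT) (V : tmod K gT).
Hypothesis HV : is_tmod (Stab act a) (fun g h => gamma g h a) V.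

Lemma U1 : Um a V 1%g = 1%:M.
Proof.
rewrite /Um -(sum_PE a V); apply: eq_bigr => b _.
by rewrite ss1 kap1 act1 scale1r HV.1 mulmx1.
Qed.

Lemma UM g h : Um a V (g * h)%g = Dg (PhiO a V) g h *m Um a V h *m Um a V g.
Proof.
rewrite -mulmxA {2}/Um mulmx_suml mulmx_sumr; apply: eq_bigr => b Hb.
rewrite -!mulmxA EU ?Orb_act // !mulmxA DgP //.
rewrite ssM actM HV.2; try by apply: ss_in; rewrite ?Orb_act.
rewrite -!scalemxAl -!scalemxAr !scalerA -!scalemxAl !scalerA.
congr (_ *: _); last by rewrite !mulmxA.
by rewrite kapM // mulrAC.
Qed.

Lemma Phi_eqobj : is_eqobj act gamma (PhiO a V).
Proof.
split.
- move=> g k l /=; rewrite /Um summxE => nz.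
  have [b] : exists b, (Pm a V b *m (kap a g b *: tm_rho V (ss a g b)) *m
                        Em a V (act g b)) k l != 0 /\ b \in Orb a.
    apply: NNPP => Hn; move/eqP: nz; apply; rewrite big1 // => b Hb.
    by apply/eqP; apply: contraT => nb; case: Hn; exists b.
  rewrite PAE_entry => -[]; case: (eqVneq (degk k) b) => [->|]; last by rewrite mul0r eqxx.
  by case: (eqVneq (degk l) (act g b)) => [->|] //=; rewrite mul0r eqxx.
- move=> g; have := UM g g^-1; rewrite mulgV U1 -mulmxA => /esym /mulmx1_unit [_].
  by rewrite unitmx_mul => /andP[].
- exact: UM.
Qed.
Lemma rhoE s : s \in Stab act a ->
  tm_rho V s *m Em a V a = Em a V a *m Um a V s.
Proof.
rewrite inE => /eqP Hs; rewrite EU ?Orb_self // Hs /kap /ss Hs tt_self.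
by rewrite invg1 mul1g mulg1 gam1l gam1r divr1 scale1r.
Qed.

Lemma UPa s : s \in Stab act a ->
  Um a V s *m Pm a V a = Pm a V a *m tm_rho V s.
Proof.
rewrite inE => /eqP Hs; have := UP V s (Orb_self a); rewrite Hs => ->.
by rewrite /kap /ss Hs tt_self invg1 mul1g mulg1 gam1l gam1r divr1 scale1r.
Qed.

Lemma Eat b : b \in Orb a ->
  Em a V a *m Um a V (tt a b) = kap a (tt a b) a *: Em a V b.
Proof.
move=> Hb; rewrite EU ?Orb_self // ttP // /ss ttP // tt_self mulg1 mulVg HV.1.
by rewrite -scalemxAl mul1mx.
Qed.

Lemma NN_gt0 : (0 < tm_dim V)%N -> (0 < NN a V)%N.
Proof.
move=> dpos; apply/card_gt0P; exists (exist _ (a, Ordinal dpos) (Orb_self a) : TT a V).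
by [].
Qed.

Lemma Phi_simple : irr_tmod (Stab act a) (fun g h => gamma g h a) V ->
  simple_eqobj act gamma (PhiO a V).
Proof.
move=> [_ [dpos Hirr]]; split; first exact: NN_gt0.
move=> W F HW [Hd Hu] Ffree.
case: (eqVneq (eq_dim W) 0%N) => [W0|Wnz]; [by left | right].
have FU g : (F *m Um a V g <= F)%MS by rewrite -Hu submxMl.
have FP b : (F *m (Pm a V b *m Em a V b) <= F)%MS.
  by rewrite -piD_Phi -graded_piD // submxMl.
have F0 : F != 0 by rewrite -mxrank_eq0 (eqP Ffree).
have [b Hb nb] : exists2 b, b \in Orb a & F *m (Pm a V b *m Em a V b) != 0.
  apply: NNPP => H; move/eqP: F0; apply.
  rewrite -[F]mulmx1 -(sum_PE a V) mulmx_sumr big1 // => b Hb.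
  apply/eqP; apply: NNPP => nb; apply: H; exists b => //; exact/negP.
have HE := Phi_eqobj.
have na : F *m (Pm a V a *m Em a V a) != 0.
  apply: contra nb => /eqP Fa.
  have Hg : act (tt a b)^-1 b = a by rewrite -{2}(ttP Hb) actK.
  have := piD_u (tt a b)^-1 b HE; rewrite Hg /= !piD_Phi => Epu.
  have : F *m (Pm a V b *m Em a V b) *m Um a V (tt a b)^-1 = 0.
    rewrite -mulmxA Epu mulmxA; apply/eqP; rewrite -submx0.
    rewrite !mulmxA -(mulmxA _ (Pm a V a)).
    eapply submx_trans; first exact: (submxMr _ (FU _)). by rewrite Fa sub0mx.
  move=> /(congr1 (mulmx^~ (invmx (Um a V (tt a b)^-1)))) /=.
  have [_ Hu' _] := HE.
  by rewrite mulmxK ?Hu' // => ->; rewrite mul0mx.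
set Uk := kermx (Em a V a *m cokermx F).
have UkE : (Uk *m Em a V a <= F)%MS by rewrite submxE -mulmxA mulmx_ker.
have YU : (F *m Pm a V a <= Uk)%MS.
  apply/sub_kermxP; rewrite mulmxA -(mulmxA F); apply/eqP; rewrite -submxE.
  exact: FP.
have Y0 : F *m Pm a V a != 0.
  by apply: contra na => /eqP Y; rewrite mulmxA Y mul0mx.
have stab s : s \in Stab act a -> (Uk *m tm_rho V s <= Uk)%MS.
  move=> Hs; apply/sub_kermxP; rewrite mulmxA -(mulmxA Uk) rhoE // mulmxA.
  apply/eqP; rewrite -submxE; exact: submx_trans (submxMr _ UkE) (FU s).
case: (Hirr Uk stab) => [Uk0|Ukf].
  by move: YU; rewrite Uk0 submx0 (negbTE Y0).
have Ea : (Em a V a <= F)%MS.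
  rewrite submxE; apply/eqP; move: Ukf; rewrite -sub1mx => /sub_kermxP.
  by rewrite mul1mx.
have Eb c : c \in Orb a -> (Em a V c <= F)%MS.
  move=> Hc; have := Eat Hc => /(congr1 (fun M => (kap a (tt a c) a)^-1 *: M)).
  rewrite scalerA mulVf ?kap_nz // scale1r => <-.
  by apply: scalemx_sub; exact: submx_trans (submxMr _ Ea) (FU _).
rewrite -sub1mx -(sum_PE a V); apply: summx_sub => c Hc.
exact: submx_trans (submxMl _ _) (Eb c Hc).
Qed.

End TM.

Lemma sum_nz (I : finType) (P : pred I) (f : I -> K) :
  \sum_(i | P i) f i != 0 -> exists2 i, P i & f i != 0.
Proof.
move=> nz; apply: NNPP => H; move/eqP: nz; apply; apply: big1 => i Pi.
by apply/eqP; apply: NNPP => ni; apply: H; exists i => //; exact/negP.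
Qed.

Definition Fm a V1 V2 (M : 'M[K]_(tm_dim V1, tm_dim V2)) : 'M[K]_(NN a V1, NN a V2) :=
  \sum_(b in Orb a) Pm a V1 b *m M *m Em a V2 b.

Lemma EF a V1 V2 (M : 'M[K]_(tm_dim V1, tm_dim V2)) c : c \in Orb a ->
  Em a V1 c *m Fm a M = M *m Em a V2 c.
Proof.
move=> Hc; rewrite mulmx_sumr (bigD1 c) //= big1 ?addr0.
  by rewrite !mulmxA E_Pd // mul1mx.
by move=> b /andP[_ nb]; rewrite !mulmxA E_Pn ?mul0mx // eq_sym.
Qed.

Lemma Fm_id a V1 V2 (M : 'M[K]_(tm_dim V1, tm_dim V2)) M' :
  M *m M' = 1%:M -> Fm a M *m Fm a M' = 1%:M.
Proof.
move=> HM; rewrite -(sum_PE a V1) /Fm mulmx_suml; apply: eq_bigr => b Hb.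
by rewrite -mulmxA EF // mulmxA -(mulmxA _ M) HM mulmx1.
Qed.

Lemma Fm_deg a V1 V2 (M : 'M[K]_(tm_dim V1, tm_dim V2)) k l :
  Fm a M k l != 0 -> degk k = degk l.
Proof.
rewrite /Fm summxE => /sum_nz [b _]; rewrite PAE_entry.
case: (degk k =P b) => [->|]; last by rewrite mul0r eqxx.
by case: (degk l =P b) => [->|] //; rewrite andbF mul0r eqxx.
Qed.

Lemma Phi_iso_back a V1 V2 : tmod_iso (Stab act a) V1 V2 -> eq_iso (PhiO a V1) (PhiO a V2).
Proof.
move=> [B [Bfree Bfull Bst]].
move/row_freeP: Bfree => [C1 BC1]; move/row_fullP: Bfull => [C2 C2B].
exists (Fm a B); split.
- split; first exact: Fm_deg.
  move=> g; rewrite /= {1}/Um mulmx_suml {2}/Fm mulmx_suml.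
  apply: eq_bigr => b Hb; rewrite -!mulmxA EF ?Orb_act // EU //.
  rewrite -!scalemxAl -!scalemxAr; congr (_ *: _).
  by rewrite (mulmxA (tm_rho V1 _)) Bst ?ss_in // -mulmxA.
- apply/row_freeP; exists (Fm a C1); exact: Fm_id.
- apply/row_fullP; exists (Fm a C2); exact: Fm_id.
Qed.

Lemma iso_same_a a V1 V2 : eq_iso (PhiO a V1) (PhiO a V2) -> tmod_iso (Stab act a) V1 V2.
Proof.
move=> [F [HF Ffree Ffull]].
move/row_freeP: Ffree => [G FG]; move/row_fullP: Ffull => [G' GF].
have GG : G' = G by rewrite -[G']mulmx1 -FG mulmxA GF mul1mx.
subst G'.
have HG := inv_eqmor HF FG GF.
have gF b : Pm a V1 b *m Em a V1 b *m F = F *m (Pm a V2 b *m Em a V2 b).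
  by rewrite -!piD_Phi; exact: (graded_piD HF.1 b).
have gG b : Pm a V2 b *m Em a V2 b *m G = G *m (Pm a V1 b *m Em a V1 b).
  by rewrite -!piD_Phi; exact: (graded_piD HG.1 b).
exists (Em a V1 a *m F *m Pm a V2 a); split.
- apply/row_freeP; exists (Em a V2 a *m G *m Pm a V1 a).
  rewrite !mulmxA -(mulmxA _ (Pm a V2 a)) -(mulmxA _ F) -gF.
  rewrite !mulmxA E_Pd ?Orb_self // mul1mx -(mulmxA _ F) FG mulmx1 E_Pd //.
  exact: Orb_self.
- apply/row_fullP; exists (Em a V2 a *m G *m Pm a V1 a).
  rewrite !mulmxA -(mulmxA _ (Pm a V1 a)) -(mulmxA _ G) -gG.
  rewrite !mulmxA E_Pd ?Orb_self // mul1mx -(mulmxA _ G) GF mulmx1 E_Pd //.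
  exact: Orb_self.
- move=> s Hs; rewrite !mulmxA rhoE // -(mulmxA _ _ F).
  case: HF => _ Hu; rewrite (Hu s) /= mulmxA -!mulmxA UPa //.
Qed.

Section Surj.
Variables (O : eqobj K gT xT) (a : xT).
Hypothesis HO : is_eqobj act gamma O.
Local Notation n := (eq_dim O).
Local Notation u := (eq_u O).
Local Notation S := (Stab act a).

Definition stabl (M : 'M[K]_n) := forall s, s \in S -> (M *m u s <= M)%MS.

Lemma min_stable : piD O a != 0 ->
  exists M0 : 'M[K]_n, [/\ M0 != 0, (M0 <= piD O a)%MS, stabl M0 &
    forall U : 'M[K]_n, (U <= M0)%MS -> stabl U -> U = 0 \/ (M0 <= U)%MS].
Proof.
move=> Pa.
suff H : forall k (M : 'M[K]_n), (\rank M <= k)%N -> M != 0 -> (M <= piD O a)%MS ->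
  stabl M -> exists M0 : 'M[K]_n, [/\ M0 != 0, (M0 <= piD O a)%MS, stabl M0 &
    forall U : 'M[K]_n, (U <= M0)%MS -> stabl U -> U = 0 \/ (M0 <= U)%MS].
  apply: (H n (piD O a) (rank_leq_col _) Pa (submx_refl _)) => s.
  rewrite inE => /eqP Hs; have := piD_u s a HO; rewrite Hs => E.
  have -> : piD O a *m u s = piD O a *m (piD O a *m u s).
    rewrite mulmxA; congr (_ *m _); rewrite {1}/piD mul_diag_mx.
    apply/matrixP=> i j; rewrite !mxE.
    by case: (dg O i == a); case: (i == j); rewrite /= ?mulr1n ?mulr0n ?mul1r ?mul0r.
  by rewrite E mulmxA submxMl.
elim=> [|k IH] M.
  by rewrite leqn0 mxrank_eq0 => /eqP ->; rewrite eqxx.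
move=> Hk M0 MP Ms.
case: (classic (forall U : 'M[K]_n, (U <= M)%MS -> stabl U -> U = 0 \/ (M <= U)%MS)).
  by move=> Hmin; exists M.
move=> /not_all_ex_not [U /not_all_ex_not [UM /not_all_ex_not [Us /not_or_and [U0 MU]]]].
have ltU : (\rank U <= k)%N.
  have : (U < M)%MS by rewrite ltmxE UM /=; apply/negP.
  by move=> /rank_ltmx ltUM; rewrite -ltnS (leq_trans ltUM).
apply: (IH U ltU) => //; first by apply/eqP.
exact: submx_trans UM MP.
Qed.

Lemma Juu m (J : 'M[K]_(m, n)) g h :
  (forall i j, J i j != 0 -> dg O j = a) ->
  J *m u h *m u g = (gamma g h a)^-1 *: (J *m u (g * h)%g).
Proof.
move=> HJ; have [_ _ Hc] := HO; rewrite Hc !mulmxA -/(Dg O g h) (supp_Dg _ _ HJ).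
by rewrite -!scalemxAl scalerA mulVf // scale1r.
Qed.

Lemma exists_irr : piD O a != 0 ->
  exists V : tmod K gT, exists J : 'M[K]_(tm_dim V, n),
    [/\ irr_tmod S (fun g h => gamma g h a) V, row_free J,
        (forall i j, J i j != 0 -> dg O j = a) &
        forall s, s \in S -> J *m u s = tm_rho V s *m J].
Proof.
move=> /min_stable [M0 [M0nz M0P M0s M0min]].
set J := row_base M0.
have sJM : (J <= M0)%MS by rewrite eq_row_base.
have sMJ : (M0 <= J)%MS by rewrite eq_row_base.
have Jfree : row_free J := row_base_free M0.
have Jinj := row_free_inj Jfree.
pose rho (g : gT) : 'M[K]_(\rank M0) := J *m u g *m pinvmx J.
have Jst s : s \in S -> (J *m u s <= J)%MS.
  move=> Hs; apply: submx_trans (submxMr _ sJM) _.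
  exact: submx_trans (M0s s Hs) sMJ.
have rhoJ s : s \in S -> rho s *m J = J *m u s by move=> Hs; rewrite mulmxKpV // Jst.
have HJ : forall i j, J i j != 0 -> dg O j = a.
  move: (submx_trans sJM M0P) => /submxP [X ->] i j.
  rewrite /piD mul_mx_diag !mxE; case: (dg O j =P a) => // _; by rewrite mulr0 eqxx.
have S1 : 1%g \in S by rewrite inE act1.
have rho1 : rho 1%g = 1%:M.
  by apply: (Jinj (\rank M0)); rewrite /= rhoJ // eqobj_u1 // mul1mx mulmx1.
exists (TMod rho), J; split => //=; last by move=> s Hs; rewrite rhoJ.
split; [split => // | split].
- move=> s t Hs Ht; apply: (Jinj (\rank M0)) => /=.
  have Hst : (s * t)%g \in S by move: Hs Ht; rewrite !inE actM => /eqP Es /eqP Et; rewrite Et Es.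
  rewrite rhoJ // -scalemxAl -mulmxA rhoJ // mulmxA rhoJ // Juu //.
  by rewrite scalerA divff // scale1r.
- by rewrite lt0n mxrank_eq0.
move=> U Ust.
have UJs : stabl <<U *m J>>%MS.
  move=> s Hs; rewrite (eqmxMr _ (genmxE _)) genmxE -mulmxA -rhoJ // mulmxA.
  exact: submxMr (Ust s Hs).
have UJM : (<<U *m J>> <= M0)%MS by rewrite genmxE; exact: submx_trans (submxMl _ _) sJM.
case: (M0min _ UJM UJs) => [UJ0|MUJ].
  left; apply: (Jinj (\rank M0)) => /=; rewrite mul0mx; apply/eqP.
  by rewrite -submx0 -UJ0 genmxE.
right; rewrite /row_full eqn_leq rank_leq_col /=.
have : (\rank J <= \rank (U *m J))%N.
  by apply: mxrankS; apply: (submx_trans sJM); apply: (submx_trans MUJ); rewrite genmxE.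
rewrite (eqP Jfree) => /leq_trans; apply; exact: mxrankM_maxl.
Qed.
Lemma surj_iso : simple_eqobj act gamma O -> piD O a != 0 ->
  exists V : tmod K gT, irr_tmod S (fun g h => gamma g h a) V /\ eq_iso O (PhiO a V).
Proof.
move=> HS /exists_irr [V [J [Virr Jfree HJ HJs]]].
exists V; split => //.
have HV := Virr.1.
pose F : 'M[K]_(NN a V, n) := \sum_(b in Orb a) Pm a V b *m J *m u (tt a b).
have EFJ c : c \in Orb a -> Em a V c *m F = J *m u (tt a c).
  move=> Hc; rewrite mulmx_sumr (bigD1 c) //= big1 ?addr0.
    by rewrite !mulmxA E_Pd // mul1mx.
  by move=> b /andP[_ nb]; rewrite !mulmxA E_Pn ?mul0mx // eq_sym.
have HF : eqmor (PhiO a V) O F.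
  split.
    move=> k l; rewrite summxE => /sum_nz [b Hb]; rewrite -mulmxA PA_entry /=.
    case: (degk k =P b) => [->|]; last by rewrite mul0r eqxx.
    rewrite mul1r => /(supp_u HO HJ); rewrite ttP //.
  move=> g; rewrite /= {1}/Um mulmx_suml /F mulmx_suml; apply: eq_bigr => b Hb.
  rewrite -!mulmxA EFJ ?Orb_act // (mulmxA J) (Juu g (tt a b) HJ).
  rewrite -scalemxAl (mulmxA (tm_rho V _)) -HJs ?ss_in // (Juu _ _ HJ) scalerA.
  have -> : (tt a (act g b) * ss a g b = g * tt a b)%g by rewrite /ss !mulgA mulgV mul1g.
  congr (_ *m (_ *: _)); rewrite /kap mulrC mulrA mulVf ?mul1r //.
have Ffree : row_free F.
  rewrite -kermx_eq0; apply/eqP; move: (mulmx_ker F); move: (kermx F) => K0 KF.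
  have KP b : b \in Orb a -> K0 *m Pm a V b = 0.
    move=> Hb; have gr := graded_piD HF.1 b; rewrite piD_Phi in gr.
    have : K0 *m Pm a V b *m J *m u (tt a b) = 0.
      rewrite -!mulmxA -EFJ // !mulmxA.
      have -> : K0 *m Pm a V b *m Em a V b *m F = K0 *m (Pm a V b *m Em a V b *m F) by rewrite !mulmxA.
      by rewrite gr mulmxA KF mul0mx.
    have [_ Hu _] := HO.
    move=> /(congr1 (mulmx^~ (invmx (u (tt a b))))) /=; rewrite mulmxK // mul0mx.
    by move=> E; apply: (row_free_inj Jfree); rewrite /= E mul0mx.
  rewrite -[K0]mulmx1 -(sum_PE a V) mulmx_sumr big1 // => b Hb.
  by rewrite mulmxA KP // mul0mx.
have [_ HS2] := HS.
case: (HS2 (PhiO a V) F (Phi_eqobj HV) HF Ffree) => [N0|Ffull].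
  by move: (NN_gt0 a Virr.2.1); rewrite -[NN a V]/(eq_dim (PhiO a V)) N0.
exact: iso_of_inv HF Ffree Ffull.
Qed.

End Surj.

End Generic.

Lemma orbit_meet (gT xT : finGroupType) (act : gT -> xT -> xT) R a a' x :
  (forall x, act 1%g x = x) -> (forall g h x, act (g * h)%g x = act g (act h x)) ->
  orbit_reps act R -> a \in R -> a' \in R -> x \in Orb act a -> x \in Orb act a' -> a = a'.
Proof.
move=> act1 actM [_ HR] Ha Ha' /imsetP[g _ ->] /imsetP[g' _ E].
apply: (HR a a' (g'^-1 * g)%g) => //.
by rewrite actM E (actK act1 actM).
Qed.

Lemma piD_nz (K : fieldType) (gT xT : finGroupType) (act : gT -> xT -> xT)
  (gamma : gT -> gT -> xT -> K) (O : eqobj K gT xT) i0 g :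
  is_eqobj act gamma O -> piD O (act g (dg O i0)) != 0.
Proof.
move=> [Hd Hu _].
have [j nz] : exists j, eq_u O g i0 j != 0.
  apply: NNPP => H.
  have := mulmxV (Hu g); move/matrixP => /(_ i0 i0); rewrite !mxE eqxx /= big1.
    by move=> /eqP; rewrite eq_sym oner_eq0.
  move=> j _; case: (eqVneq (eq_u O g i0 j) 0) => [->|nj]; first by rewrite mul0r.
  by case: H; exists j.
apply/eqP => /matrixP /(_ j j); rewrite !mxE eqxx /= (Hd _ _ _ nz) eqxx /=.
by move/eqP; rewrite oner_eq0.
Qed.

Local Close Scope ring_scope.

Theorem proposition5p5 (K : closedFieldType) (gT xT : finGroupType)
  (act : gT -> xT -> xT) (del : xT -> gT)
  (omega : xT -> xT -> xT -> K) (gamma : gT -> gT -> xT -> K)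
  (mu : gT -> xT -> xT -> K) (c : xT -> xT -> K) (R : {set xT}) :
  [pchar K]%R =i pred0 ->
  crossed_module act del ->
  quasi_abelian_3cocycle act del omega gamma mu c ->
  normalized_cocycle omega gamma mu c ->
  orbit_reps act R ->
  exists Phi : xT -> tmod K gT -> eqobj K gT xT,
    [/\ (forall a V, a \in R -> irr_tmod (Stab act a) (fun g h => gamma g h a) V ->
           is_eqobj act gamma (Phi a V) /\ simple_eqobj act gamma (Phi a V)),
        (forall a V a' V', a \in R -> irr_tmod (Stab act a) (fun g h => gamma g h a) V ->
           a' \in R -> irr_tmod (Stab act a') (fun g h => gamma g h a') V' ->
           (eq_iso (Phi a V) (Phi a' V') <-> a = a' /\ tmod_iso (Stab act a) V V'))
      & (forall O, is_eqobj act gamma O -> simple_eqobj act gamma O ->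
           exists a V, [/\ a \in R, irr_tmod (Stab act a) (fun g h => gamma g h a) V
                          & eq_iso O (Phi a V)])].
Proof.
move=> _ [act1 [actM _]] [[_ [gam_nz _]] [_ [gam_coc _]]] [_ Hg _ _] HR.
have gam1l h x : gamma 1%g h x = 1%R by apply: Hg; rewrite eqxx.
have gam1r g x : gamma g 1%g x = 1%R by apply: Hg; rewrite eqxx orbT.
exists (PhiO act gamma); split.
- move=> a V Ha Virr; split.
    exact: (Phi_eqobj act1 actM gam_nz gam1l gam1r gam_coc Virr.1).
  exact: (Phi_simple act1 actM gam_nz gam1l gam1r gam_coc Virr.1 Virr).
- move=> a V a' V' Ha Virr Ha' Virr'; split.
    move=> Hiso.
    have Eaa : a = a'.
      case: Hiso => [F [[Hd _] Ffree _]].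
      have F0 : F != 0%R.
        rewrite -mxrank_eq0 (eqP Ffree) -lt0n.
        exact: (NN_gt0 act1 a Virr.2.1).
      case/matrix0Pn: F0 => k [l /Hd /= Ekl].
      apply: (orbit_meet act1 actM HR Ha Ha' (degk_Orb k)).
      by rewrite Ekl degk_Orb.
    subst a'; split => //.
    exact: (iso_same_a act1 actM gam1l gam1r Hiso).
  by case=> <- Hi; exact: (Phi_iso_back gamma act1 actM Hi).
- move=> O HO HS.
  have [n0 _] := HS.
  pose i0 : 'I_(eq_dim O) := Ordinal n0.
  case: HR => [HR1 _]; have [r Hr [g0 Eg0]] := HR1 (dg O i0).
  have Pnz : piD O r != 0%R.
    have := piD_nz i0 g0^-1 HO; rewrite Eg0 (actK act1 actM) //.
  have [V [Virr Hiso]] := surj_iso act1 actM gam_nz gam1l gam1r gam_coc HO HS Pnz.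
  by exists r, V.
Qed.
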